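(* (i) For $s=\sigma+i\tau$ with any fixed real $\sigma\notin\{1-s_i:i\ge0\}$, there is $c=c(\sigma)>0$ with $|\psi(1-s)-\psi(1)|\ge c$ for all $\tau\in\mathbb{R}$. (ii) For any compact $K\subset\mathbb{R}$ there is $c>0$ with $|\psi(1-s)-\psi(1)|\ge c$ for all $s=\sigma+i\tau$ with $\sigma\in K$ and $|\tau|\ge1$.
   Context: $\psi$ is the digamma function; $s_0=1>s_1>s_2>\cdots$ are the (real) roots of $\psi(s)=\psi(1)$, with $s_i\in(-i,-(i-1))$ for $i\ge1$. *)

(* Defs.v *)
From Stdlib Require Import Reals.
From Coquelicot Require Import Coquelicot.
Open Scope R_scope.

Definition euler_gamma : R :=
  real (Lim_seq (fun n => sum_f_R0 (fun k => / INR (S k)) n - ln (INR (S n)))).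

(* n-th term of the standard series psi(z) = -gamma + sum_{n>=0} (1/(n+1) - 1/(n+z)). *)
Definition psi_term (z : C) (n : nat) : C :=
  (/ RtoC (INR (S n)) - / (RtoC (INR n) + z))%C.

(* The digamma function on C (meaningful away from the poles 0,-1,-2,...);
   the complex series is summed componentwise. *)
Definition digamma (z : C) : C :=
  (RtoC (- euler_gamma)
   + (Series (fun n => Re (psi_term z n)), Series (fun n => Im (psi_term z n))))%C.

Definition is_pole (z : C) : Prop := exists k : nat, z = RtoC (- INR k).

(* s is a real root of psi(s) = psi(1), i.e. one of the s_i. *)
Definition psi1_root (s : R) : Prop :=
  ~ is_pole (RtoC s) /\ digamma (RtoC s) = digamma (RtoC 1).

(* Main.v *)
Require Import Defs.
From Stdlib Require Import Reals Lra Lia.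
From Coquelicot Require Import Coquelicot.
Open Scope R_scope.

Definition ReT (a t : R) (n : nat) : R := /(INR n + 1) - (INR n + a) / ((INR n + a)^2 + t^2).
Definition gT (a t : R) (n : nat) : R := /((INR n + a)^2 + t^2).

Lemma Re_term a t n : Re (psi_term (a,t) n) = ReT a t n.
Proof.
  unfold psi_term, ReT, Cminus, Cplus, Copp, Cinv, RtoC, Re, Im; cbn [fst snd].
  rewrite S_INR, Rplus_0_l. assert (0 <= INR n) by apply pos_INR.
  unfold Rminus. f_equal. field. lra.
Qed.

Lemma Im_term a t n : Im (psi_term (a,t) n) = t * gT a t n.
Proof.
  unfold psi_term, gT, Cminus, Cplus, Copp, Cinv, RtoC, Re, Im; cbn [fst snd].
  rewrite Rplus_0_l. unfold Rdiv. change RinvImpl.Rinv with Rinv. ring.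
Qed.
Lemma tel_sum n : sum_f_R0 (fun k => /(INR k+1) - /(INR k+2)) n = 1 - /(INR n + 2).
Proof.
  induction n as [|n IH].
  - cbn [sum_f_R0]. change (INR 0) with 0. rewrite !Rplus_0_l. field.
  - change (sum_f_R0 (fun k => /(INR k+1) - /(INR k+2)) (S n)) with
      (sum_f_R0 (fun k => /(INR k+1) - /(INR k+2)) n + (/(INR (S n)+1) - /(INR (S n)+2))).
    rewrite IH, S_INR. assert (0 <= INR n) by apply pos_INR. field. lra.
Qed.

Lemma tel_series : ex_series (fun k => /(INR k+1) - /(INR k+2)).
Proof.
  exists 1.
  assert (H : is_lim_seq (fun n => 1 - /(INR n + 2)) 1).
  { assert (H0 : is_lim_seq (fun n => /(INR n + 2)) 0).
    { change (Finite 0) with (Rbar_inv p_infty).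
      apply is_lim_seq_inv. 2: discriminate.
      eapply is_lim_seq_plus. apply is_lim_seq_INR. apply is_lim_seq_const. simpl. reflexivity. }
    assert (H1 := is_lim_seq_minus' _ _ 1 0 (is_lim_seq_const 1) H0).
    rewrite Rminus_0_r in H1. exact H1. }
  assert (H2 : is_lim_seq (sum_n (fun k => /(INR k+1) - /(INR k+2))) 1).
  { eapply is_lim_seq_ext. 2: exact H. intros n. simpl. rewrite sum_n_Reals, tel_sum. reflexivity. }
  exact H2.
Qed.

Lemma Rinv_nonneg x : 0 <= x -> 0 <= / x.
Proof.
  intros H. destruct (Req_dec x 0) as [->|Hx].
  - rewrite Rinv_0. lra.
  - left. apply Rinv_0_lt_compat. lra.
Qed.

Lemma ex_series_bound (f : nat -> R) (M : R) (N : nat) :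
  0 <= M -> (forall n, (N <= n)%nat -> Rabs (f n) <= M / (INR n + 1)^2) -> ex_series f.
Proof.
  intros HM Hb.
  apply (ex_series_incr_n f N).
  apply (@ex_series_le R_AbsRing R_CompleteNormedModule _ (fun k => (/(INR k+1) - /(INR k+2)) * (2*M))).
  2: { apply ex_series_scal_r. apply tel_series. }
  intros k. change (norm (f (N + k)%nat)) with (Rabs (f (N + k)%nat)).
  eapply Rle_trans. apply Hb. lia.
  assert (H0 : 0 <= INR k) by apply pos_INR.
  assert (H1 : INR k <= INR (N + k)) by (apply le_INR; lia).
  replace ((/(INR k+1) - /(INR k+2)) * (2*M)) with (M * (2 / ((INR k + 1) * (INR k + 2)))) by (field; lra).
  unfold Rdiv. apply Rmult_le_compat_l. exact HM.
  rewrite <- (Rmult_1_l (/ (INR (N+k) + 1)^2)).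
  replace (2 * / ((INR k + 1) * (INR k + 2))) with (2 * (INR k + 1) / (INR k + 2) * / ((INR k+1)^2)) by (field; lra).
  apply Rmult_le_compat.
  - lra.
  - apply Rinv_nonneg. nra.
  - apply Rmult_le_reg_r with (INR k + 2). lra. unfold Rdiv. rewrite Rmult_assoc, Rinv_l by lra. lra.
  - apply Rinv_le_contravar. nra. nra.
Qed.

Lemma big_u (a : R) : exists N : nat, forall n, (N <= n)%nat -> (INR n + 1)/2 <= INR n + a.
Proof.
  assert (Hx : 0 <= 2 * Rabs a + 1) by (pose proof (Rabs_pos a); lra).
  destruct (nfloor_ex _ Hx) as [N [_ HN]].
  exists (S N). intros n Hn.
  apply le_INR in Hn. rewrite S_INR in Hn.
  pose proof (Rle_abs (-a)) as Ha. rewrite Rabs_Ropp in Ha. lra.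
Qed.

Lemma Series_zero : Series (fun _ => 0) = 0.
Proof.
  rewrite (Series_ext _ (fun n => 0 * 0)) by (intros; ring).
  rewrite Series_scal_l. ring.
Qed.

Lemma sum_ge_term (f : nat -> R) N k : (forall n, 0 <= f n) -> (k <= N)%nat -> f k <= sum_f_R0 f N.
Proof.
  intros Hf Hk. induction N as [|N IH].
  - assert (k = 0%nat) by lia. subst. simpl. lra.
  - simpl. destruct (Nat.eq_dec k (S N)) as [->|Hne].
    + pose proof (cond_pos_sum f N Hf). lra.
    + pose proof (Hf (S N)). assert (f k <= sum_f_R0 f N) by (apply IH; lia). lra.
Qed.

Lemma sum_lower (f : nat -> R) N c : (forall k, (k <= N)%nat -> c <= f k) -> (INR N + 1) * c <= sum_f_R0 f N.
Proof.
  induction N as [|N IH]; intros Hc.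
  - simpl. assert (c <= f 0%nat) by (apply Hc; lia). lra.
  - simpl sum_f_R0. rewrite S_INR.
    assert (c <= f (S N)) by (apply Hc; lia).
    assert ((INR N + 1) * c <= sum_f_R0 f N) by (apply IH; intros; apply Hc; lia).
    lra.
Qed.

Lemma Series_ge_sum (f : nat -> R) N : (forall n, 0 <= f n) -> ex_series f -> sum_f_R0 f N <= Series f.
Proof.
  intros Hf Hex.
  rewrite (Series_incr_n f (S N)) by (lia || exact Hex).
  simpl pred.
  assert (0 <= Series (fun k => f (S N + k)%nat)).
  { rewrite <- Series_zero. apply Series_le.
    - intros n. split. lra. apply Hf.
    - apply (ex_series_incr_n f (S N)). exact Hex. }
  lra.
Qed.

Lemma Series_ge_term (f : nat -> R) k : (forall n, 0 <= f n) -> ex_series f -> f k <= Series f.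
Proof.
  intros Hf Hex. eapply Rle_trans. apply (sum_ge_term f k k Hf). lia.
  apply Series_ge_sum; assumption.
Qed.

Lemma sq_abs x : x ^ 2 = Rabs x ^ 2.
Proof. rewrite <- Rsqr_pow2, <- Rsqr_pow2. apply Rsqr_abs. Qed.

Lemma gT_nonneg a t n : 0 <= gT a t n.
Proof. unfold gT. apply Rinv_nonneg. pose proof (pow2_ge_0 (INR n + a)). pose proof (pow2_ge_0 t). lra. Qed.

Lemma gT_ex a t : ex_series (gT a t).
Proof.
  destruct (big_u a) as [N HN].
  apply (ex_series_bound _ 4 N). lra.
  intros n Hn. specialize (HN n Hn).
  assert (H0 : 0 <= INR n) by apply pos_INR.
  rewrite Rabs_pos_eq by apply gT_nonneg. unfold gT.
  replace (4 / (INR n + 1)^2) with (/ (((INR n + 1)/2)^2)) by (field; lra).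
  apply Rinv_le_contravar. nra. nra.
Qed.

Lemma im_core a A t : Rabs a <= A -> 1 <= Rabs t -> / ((1+A)^2+1) <= Rabs t * Series (gT a t).
Proof.
  intros Ha Ht.
  set (T := Rabs t). assert (HT0 : 0 <= T) by apply Rabs_pos. assert (HT1a : 1 <= T) by exact Ht.
  assert (HA : 0 <= A) by (pose proof (Rabs_pos a); lra).
  destruct (nfloor_ex T HT0) as [N [HN1 HN2]].
  set (B := (1+A)^2+1). assert (HB : 1 <= B) by (unfold B; nra).
  assert (Ht2 : t^2 = T^2) by apply sq_abs.
  assert (Hk : forall k, (k <= N)%nat -> / (B * T^2) <= gT a t k).
  { intros k Hk. unfold gT.
    apply le_INR in Hk.
    assert (H0 : 0 <= INR k) by apply pos_INR.
    assert (Hu : Rabs (INR k + a) <= (1+A) * T).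
    { eapply Rle_trans. apply Rabs_triang. rewrite Rabs_pos_eq by lra. nra. }
    assert (Hu2 : (INR k + a)^2 <= ((1+A)*T)^2).
    { rewrite sq_abs. pose proof (Rabs_pos (INR k + a)). nra. }
    apply Rinv_le_contravar.
    - pose proof (pow2_ge_0 (INR k + a)). nra.
    - unfold B. rewrite Ht2. nra. }
  pose proof (sum_lower _ _ _ Hk) as Hs.
  pose proof (Series_ge_sum (gT a t) N (gT_nonneg a t) (gT_ex a t)) as Hser.
  assert (HT1 : 0 < T) by lra.
  assert (Hinv : / B = T * (T * / (B * T^2))) by (field; lra).
  rewrite Hinv. apply Rmult_le_compat_l. lra.
  eapply Rle_trans. 2: exact Hser. eapply Rle_trans. 2: exact Hs.
  apply Rmult_le_compat_r. apply Rinv_nonneg. nra. lra.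
Qed.

Definition hT (a : R) (n : nat) : R := / (Rabs (INR n + a) ^ 3).

Lemma hT_nonneg a n : 0 <= hT a n.
Proof. unfold hT. apply Rinv_nonneg. pose proof (Rabs_pos (INR n + a)). apply pow_le. lra. Qed.

Lemma hT_ex a : ex_series (hT a).
Proof.
  destruct (big_u a) as [N HN].
  apply (ex_series_bound _ 8 N). lra.
  intros n Hn. specialize (HN n Hn).
  assert (H0 : 0 <= INR n) by apply pos_INR.
  rewrite Rabs_pos_eq by apply hT_nonneg. unfold hT.
  rewrite (Rabs_pos_eq (INR n + a)) by lra.
  replace (8 / (INR n + 1)^2) with (/ ((INR n + 1)^2 / 8)) by (field; lra).
  apply Rinv_le_contravar. nra.
  assert (((INR n+1)/2)^3 <= (INR n + a)^3) by (apply pow_incr; lra).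
  nra.
Qed.

Lemma ReT0_ex a : ex_series (ReT a 0).
Proof.
  destruct (big_u a) as [N HN].
  apply (ex_series_bound _ (2 * Rabs (a - 1)) N). pose proof (Rabs_pos (a-1)); lra.
  intros n Hn. specialize (HN n Hn).
  assert (H0 : 0 <= INR n) by apply pos_INR.
  unfold ReT.
  replace (/ (INR n + 1) - (INR n + a) / ((INR n + a) ^ 2 + 0 ^ 2))
    with ((a - 1) * / ((INR n + 1) * (INR n + a))) by (field; lra).
  rewrite Rabs_mult, (Rabs_pos_eq (/ _)).
  2: { left. apply Rinv_0_lt_compat. nra. }
  replace (2 * Rabs (a - 1) / (INR n + 1) ^ 2) with (Rabs (a-1) * / ((INR n + 1) * (INR n + 1) / 2)) by (field; lra).
  apply Rmult_le_compat_l. apply Rabs_pos.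
  apply Rinv_le_contravar. nra. nra.
Qed.

Lemma Dbound u t : u <> 0 -> Rabs (u/(u^2+t^2) - u/(u^2+0^2)) <= t^2 * / (Rabs u ^ 3).
Proof.
  intros Hu.
  assert (Hu2 : 0 < u^2) by (rewrite <- Rsqr_pow2; apply Rsqr_pos_lt; exact Hu).
  assert (Ht2 : 0 <= t^2) by apply pow2_ge_0.
  replace (u/(u^2+t^2) - u/(u^2+0^2)) with (- (t^2 * / (u * (u^2 + t^2)))) by (field; lra).
  rewrite Rabs_Ropp, Rabs_mult, (Rabs_pos_eq (t^2)) by lra.
  apply Rmult_le_compat_l. lra.
  rewrite Rabs_inv, Rabs_mult, (Rabs_pos_eq (u^2+t^2)) by lra.
  assert (HU : 0 < Rabs u) by (apply Rabs_pos_lt; exact Hu).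
  rewrite (sq_abs u) in *.
  apply Rinv_le_contravar. apply pow_lt. lra.
  nra.
Qed.

Lemma re_close a t : (forall n, INR n + a <> 0) ->
  Rabs (Series (ReT a t) - Series (ReT a 0)) <= t^2 * Series (hT a).
Proof.
  intros Hnp.
  set (E := fun n => ReT a 0 n - ReT a t n).
  assert (HE : forall n, Rabs (E n) <= hT a n * t^2).
  { intros n. unfold E, ReT, hT.
    replace (/ (INR n + 1) - (INR n + a) / ((INR n + a) ^ 2 + 0 ^ 2) -
      (/ (INR n + 1) - (INR n + a) / ((INR n + a) ^ 2 + t ^ 2)))
      with ((INR n + a) / ((INR n + a) ^ 2 + t ^ 2) - (INR n + a) / ((INR n + a) ^ 2 + 0 ^ 2)) by ring.
    rewrite Rmult_comm. apply Dbound. apply Hnp. }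
  assert (Hb : ex_series (fun n => hT a n * t^2)) by (apply ex_series_scal_r; apply hT_ex).
  assert (HexE : ex_series E).
  { apply (@ex_series_le R_AbsRing R_CompleteNormedModule E (fun n => hT a n * t^2)); [|exact Hb].
    intros n. exact (HE n). }
  assert (HexAE : ex_series (fun n => Rabs (E n))).
  { apply (@ex_series_le R_AbsRing R_CompleteNormedModule (fun n => Rabs (E n)) (fun n => hT a n * t^2)); [|exact Hb].
    intros n. change (norm (Rabs (E n))) with (Rabs (Rabs (E n))). rewrite Rabs_Rabsolu. exact (HE n). }
  rewrite (Series_ext (ReT a t) (fun n => ReT a 0 n - E n)) by (intros; unfold E; ring).
  rewrite Series_minus by (apply ReT0_ex || exact HexE).
  replace (Series (ReT a 0) - Series E - Series (ReT a 0)) with (- Series E) by ring.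
  rewrite Rabs_Ropp.
  eapply Rle_trans. apply Series_Rabs. exact HexAE.
  rewrite Rmult_comm, <- Series_scal_r.
  apply Series_le. intros n. split. apply Rabs_pos. apply HE. exact Hb.
Qed.

Lemma digamma_pair a t : digamma (a,t) = (-euler_gamma + Series (ReT a t), 0 + t * Series (gT a t)).
Proof.
  unfold digamma.
  rewrite (Series_ext _ (ReT a t)) by (intros; apply Re_term).
  rewrite (Series_ext (fun n => Im (psi_term (a, t) n)) (fun n => t * gT a t n)) by (intros; apply Im_term).
  rewrite Series_scal_l. reflexivity.
Qed.

Lemma cm_re (p q : C) : Rabs (fst p - fst q) <= Cmod (p - q)%C.
Proof.
  unfold Cmod, Cminus, Cplus, Copp. cbn [fst snd].
  rewrite <- sqrt_Rsqr_abs. apply sqrt_le_1_alt. unfold Rsqr.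
  pose proof (pow2_ge_0 (snd p + - snd q)). unfold Rminus. nra.
Qed.

Lemma cm_im (p q : C) : Rabs (snd p - snd q) <= Cmod (p - q)%C.
Proof.
  unfold Cmod, Cminus, Cplus, Copp. cbn [fst snd].
  rewrite <- sqrt_Rsqr_abs. apply sqrt_le_1_alt. unfold Rsqr.
  pose proof (pow2_ge_0 (fst p + - fst q)). unfold Rminus. nra.
Qed.

Lemma cm_im_dig a t : Rabs t * Series (gT a t) <= Cmod (digamma (a,t) - digamma (RtoC 1))%C.
Proof.
  eapply Rle_trans. 2: apply cm_im.
  change (RtoC 1) with (1, 0). rewrite !digamma_pair. cbn [fst snd].
  replace (0 + t * Series (gT a t) - (0 + 0 * Series (gT 1 0))) with (t * Series (gT a t)) by ring.
  rewrite Rabs_mult, (Rabs_pos_eq (Series _)). lra.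
  rewrite <- Series_zero. apply Series_le. intros n; split; [lra| apply gT_nonneg]. apply gT_ex.
Qed.

Lemma cm_re_dig a t : Rabs (Series (ReT a t) - Series (ReT 1 0)) <= Cmod (digamma (a,t) - digamma (RtoC 1))%C.
Proof.
  eapply Rle_trans. 2: apply cm_re.
  change (RtoC 1) with (1, 0). rewrite !digamma_pair. cbn [fst snd].
  replace (- euler_gamma + Series (ReT a t) - (- euler_gamma + Series (ReT 1 0)))
    with (Series (ReT a t) - Series (ReT 1 0)) by ring. lra.
Qed.

From Stdlib Require Import Classical.

Theorem lemma10p3 :
  (forall sigma : R,
      (forall s : R, psi1_root s -> sigma <> 1 - s) ->
      exists c : R, 0 < c /\
        forall tau : R,
          ~ is_pole (RtoC 1 - (sigma, tau))%C ->
          c <= Cmod (digamma (RtoC 1 - (sigma, tau)) - digamma (RtoC 1))%C)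
  /\
  (forall K : R -> Prop, compact K ->
      exists c : R, 0 < c /\
        forall sigma tau : R, K sigma -> 1 <= Rabs tau ->
          c <= Cmod (digamma (RtoC 1 - (sigma, tau)) - digamma (RtoC 1))%C).
Proof.
  split.
  - intros sigma Hs.
    set (a := 1 + - sigma).
    set (B := (1 + Rabs a)^2 + 1).
    assert (HB : 1 <= B) by (unfold B; pose proof (Rabs_pos a); nra).
    assert (HBi : 0 < / B) by (apply Rinv_0_lt_compat; lra).
    destruct (classic (exists k : nat, a = - INR k)) as [[k Hk]|Hnp].
    + exists (Rmin (/ B) 1). split. { apply Rmin_pos; lra. }
      intros tau Hpole.
      change (RtoC 1 - (sigma, tau))%C with (a, 0 + - tau).
      set (t := 0 + - tau).
      eapply Rle_trans. 2: apply cm_im_dig.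
      destruct (Rle_lt_dec 1 (Rabs t)) as [Ht|Ht].
      * eapply Rle_trans. apply Rmin_l. apply im_core. lra. exact Ht.
      * assert (Htau : t <> 0).
        { intros Ht0. apply Hpole. exists k.
          change (RtoC 1 - (sigma, tau))%C with (a, t). rewrite Ht0, Hk. reflexivity. }
        eapply Rle_trans. apply Rmin_r.
        assert (Hg : gT a t k <= Series (gT a t)) by (apply Series_ge_term; [apply gT_nonneg | apply gT_ex]).
        assert (HT : 0 < Rabs t) by (apply Rabs_pos_lt; exact Htau).
        assert (Hgk : gT a t k = / (Rabs t ^ 2)).
        { unfold gT. replace (INR k + a) with 0 by (rewrite Hk; ring). rewrite (sq_abs t). f_equal. ring. }
        rewrite Hgk in Hg.
        assert (Hm : Rabs t * / Rabs t ^ 2 <= Rabs t * Series (gT a t)) by (apply Rmult_le_compat_l; lra).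
        replace (Rabs t * / Rabs t ^ 2) with (/ Rabs t) in Hm by (field; lra).
        assert (1 <= / Rabs t). { rewrite <- Rinv_1. apply Rinv_le_contravar; lra. }
        lra.
    + assert (Hu : forall n, INR n + a <> 0).
      { intros n Hn. apply Hnp. exists n. lra. }
      assert (Hd : Series (ReT a 0) <> Series (ReT 1 0)).
      { intros Heq. apply (Hs a). split.
        - intros [k Hk]. apply Hnp. exists k. change (RtoC a) with (a, 0) in Hk.
          injection Hk. auto.
        - change (RtoC a) with (a, 0). change (RtoC 1) with (1, 0).
          rewrite !digamma_pair, Heq. f_equal. ring.
        - unfold a. ring. }
      set (d := Rabs (Series (ReT a 0) - Series (ReT 1 0))).
      assert (Hdp : 0 < d) by (apply Rabs_pos_lt; lra).
      set (Cc := Series (hT a)).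
      assert (HC : 0 <= Cc).
      { unfold Cc. rewrite <- Series_zero. apply Series_le. intros n; split; [lra| apply hT_nonneg]. apply hT_ex. }
      set (dl := Rmin 1 (d / (2 * (Cc + 1)))).
      assert (Hdl0 : 0 < dl) by (apply Rmin_pos; [lra| apply Rdiv_lt_0_compat; lra]).
      assert (Hdl1 : dl <= 1) by apply Rmin_l.
      assert (Hdl2 : dl <= d / (2 * (Cc + 1))) by apply Rmin_r.
      assert (Ha2 : 0 < a^2 + 1) by (pose proof (pow2_ge_0 a); lra).
      exists (Rmin (/ B) (Rmin (dl / (a^2+1)) (d/2))). split.
      { apply Rmin_pos. lra. apply Rmin_pos. apply Rdiv_lt_0_compat; lra. lra. }
      intros tau _.
      change (RtoC 1 - (sigma, tau))%C with (a, 0 + - tau).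
      set (t := 0 + - tau).
      destruct (Rle_lt_dec 1 (Rabs t)) as [Ht|Ht].
      * eapply Rle_trans. 2: apply cm_im_dig.
        eapply Rle_trans. apply Rmin_l. apply im_core. lra. exact Ht.
      * destruct (Rle_lt_dec dl (Rabs t)) as [Ht2|Ht2].
        -- eapply Rle_trans. 2: apply cm_im_dig.
           eapply Rle_trans. apply Rmin_r. eapply Rle_trans. apply Rmin_l.
           assert (Hg : gT a t 0 <= Series (gT a t)) by (apply Series_ge_term; [apply gT_nonneg | apply gT_ex]).
           assert (Hgk : gT a t 0 = / (a^2 + t^2)) by (unfold gT; change (INR 0) with 0; rewrite Rplus_0_l; reflexivity).
           rewrite Hgk in Hg.
           assert (Ht1 : t^2 <= 1). { rewrite sq_abs. pose proof (Rabs_pos t). nra. }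
           assert (/ (a^2+1) <= / (a^2 + t^2)).
           { apply Rinv_le_contravar. pose proof (pow2_ge_0 a). pose proof (pow2_ge_0 t).
             destruct (Req_dec t 0) as [Ht0|Ht0]. { rewrite Ht0, Rabs_R0 in Ht2. lra. }
             assert (0 < t^2) by (rewrite <- Rsqr_pow2; apply Rsqr_pos_lt; exact Ht0). lra. lra. }
           unfold Rdiv. apply Rmult_le_compat. lra. left; apply Rinv_0_lt_compat; lra. exact Ht2. lra.
        -- eapply Rle_trans. 2: apply cm_re_dig.
           eapply Rle_trans. apply Rmin_r. eapply Rle_trans. apply Rmin_r.
           pose proof (re_close a t Hu) as Hrc. fold Cc in Hrc.
           assert (Ht1 : t^2 <= d / (2 * (Cc + 1))).
           { rewrite sq_abs. pose proof (Rabs_pos t). nra. }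
           assert (Ht3 : t^2 * (2 * (Cc + 1)) <= d).
           { apply (Rmult_le_compat_r (2 * (Cc + 1))) in Ht1. 2: lra.
             unfold Rdiv in Ht1. rewrite Rmult_assoc, Rinv_l in Ht1 by lra. lra. }
           assert (Ht4 : t^2 * Cc <= d / 2) by (pose proof (pow2_ge_0 t); nra).
           unfold d in *.
           pose proof (Rabs_triang_inv (Series (ReT a 0) - Series (ReT 1 0)) (Series (ReT a 0) - Series (ReT a t))).
           replace (Series (ReT a 0) - Series (ReT 1 0) - (Series (ReT a 0) - Series (ReT a t)))
             with (Series (ReT a t) - Series (ReT 1 0)) in H by ring.
           rewrite <- Rabs_Ropp in Hrc.
           replace (- (Series (ReT a t) - Series (ReT a 0))) with (Series (ReT a 0) - Series (ReT a t)) in Hrc by ring.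
           lra.
  - intros K HK.
    destruct (compact_P1 K HK) as [m [M HmM]].
    set (A := 1 + Rabs m + Rabs M).
    assert (HA : 0 <= A) by (unfold A; pose proof (Rabs_pos m); pose proof (Rabs_pos M); lra).
    exists (/ ((1 + A)^2 + 1)). split.
    { apply Rinv_0_lt_compat. nra. }
    intros sigma tau Hk Ht.
    change (RtoC 1 - (sigma, tau))%C with (1 + - sigma, 0 + - tau).
    eapply Rle_trans. 2: apply cm_im_dig.
    apply im_core.
    + specialize (HmM sigma Hk). apply Rabs_le.
      pose proof (Rle_abs m). pose proof (Rle_abs M).
      pose proof (Rle_abs (-m)). pose proof (Rle_abs (-M)). rewrite Rabs_Ropp in *. unfold A. lra.
    + rewrite Rplus_0_l, Rabs_Ropp. exact Ht.
Qed.
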